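(* Let $L$ be an $\omega$-regular language and let $\mathcal{F}=(M,\{A^u\})$ be the periodic (respectively syntactic, recurrent) FDFA of $L$. Define $UP_{\mathrm{orig}}(\mathcal{F})$ as the set of words $uv^\omega$ ($u\in\Sigma^*$, $v\in\Sigma^+$) such that: in the periodic case, $v\in L(A^{M(u)})$; in the syntactic and recurrent cases, $M(uv)=M(u)$ and $v\in L(A^{M(u)})$. Then $UP_{\mathrm{orig}}(\mathcal{F})=UP(\mathcal{F})$.
   Context: For a complete DFA $A$ and finite word $w$, $A(w)$ is the state reached from the initial state on $w$. An FDFA is $\mathcal{F}=(M,\{A^q\}_{q\in Q})$ with $M$ a complete DFA without accepting states and each $A^q$ a complete DFA; $(u,v)$ is accepted by $\mathcal{F}$ iff $M(uv)=M(u)$ and $v\in L(A^{M(u)})$, and $UP(\mathcal{F})=\{uv^\omega: v\in\Sigma^+,\ (u,v)\text{ accepted}\}$. Canonical FDFAs of an $\omega$-regular $L$: $x\sim_L y$ iff $\forall w\in\Sigma^\omega$, $xw\in L\Leftrightarrow yw\in L$. The leading automaton has states the classes of $\sim_L$, initial state $[\epsilon]$, transitions $[x]\xrightarrow{a}[xa]$. For each state with representative $u$: $x\approx^u_P y$ iff $\forall v\in\Sigma^*$: $u(xv)^\omega\in L\Leftrightarrow u(yv)^\omega\in L$; $x\approx^u_S y$ iff $ux\sim_L uy$ and $\forall v$: $uxv\sim_L u\Rightarrow(u(xv)^\omega\in L\Leftrightarrow u(yv)^\omega\in L)$; $x\approx^u_R y$ iff $\forall v$: $(uxv\sim_L u\wedge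 u(xv)^\omega\in L)\Leftrightarrow(uyv\sim_L u\wedge u(yv)^\omega\in L)$. For $K\in\{P,S,R\}$ the progress automaton $A^u$ has states the classes of $\approx^u_K$, initial state $[\epsilon]$, transitions $[x]\xrightarrow{a}[xa]$, and accepting states the classes $[v]$ with $uv^\omega\in L$ ($K=P$), resp. with $uv\sim_L u$ and $uv^\omega\in L$ ($K\in\{S,R\}$). These are the periodic, syntactic and recurrent FDFAs of $L$. *)

(* Defs.v *)
From Stdlib Require Import ClassicalEpsilon.
From mathcomp Require Import all_boot.

Set Implicit Arguments.
Unset Strict Implicit.
Unset Printing Implicit Defensive.

Section Words.
Variable S : finType.

Fixpoint prepend (u : seq S) (w : nat -> S) : nat -> S :=
  match u with
  | [::] => w
  | a :: u' => fun n => match n with 0 => a | n'.+1 => prepend u' w n' end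
  end.

(** [opow a v'] is the omega-word (a :: v')^omega (nonempty period). *)
Definition opow (a : S) (v' : seq S) : nat -> S :=
  fun n => nth a (a :: v') (n %% (size v').+1).

Record NBA := {
  nba_state : finType;
  nba_init : pred nba_state;
  nba_trans : nba_state -> S -> nba_state -> bool;
  nba_final : pred nba_state }.

Definition nba_accepts (A : NBA) (w : nat -> S) : Prop :=
  exists r : nat -> nba_state A,
    nba_init (r 0) /\ (forall n, nba_trans (r n) (w n) (r n.+1)) /\
    (forall N, exists2 n, N <= n & nba_final (r n)).

Definition omega_regular (L : (nat -> S) -> Prop) : Prop :=
  exists A : NBA, forall w, L w <-> nba_accepts A w.

Record DFA := {
  dstate : Type;
  dinit : dstate;
  dstep : dstate -> S -> dstate;
  dacc : dstate -> Prop }.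

Definition drun (A : DFA) (w : seq S) : dstate A := foldl (@dstep A) (dinit A) w.
Definition dlang (A : DFA) (w : seq S) : Prop := dacc (drun A w).

(** FDFAs: a leading DFA (its acceptance component is unused / empty)
    and a progress DFA for each of its states. *)
Record FDFA := {
  lead : DFA;
  prog : dstate lead -> DFA }.

Definition fdfa_accepts (F : FDFA) (u v : seq S) : Prop :=
  drun (lead F) (u ++ v) = drun (lead F) u /\ dlang (@prog F (drun (lead F) u)) v.

Definition UP (F : FDFA) (w : nat -> S) : Prop :=
  exists (u : seq S) (a : S) (v' : seq S),
    fdfa_accepts F u (a :: v') /\ forall n, w n = prepend u (opow a v') n.

Inductive fdfa_kind := Periodic | Syntactic | Recurrent.

Definition UP_orig (K : fdfa_kind) (F : FDFA) (w : nat -> S) : Prop :=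
  exists (u : seq S) (a : S) (v' : seq S),
    (match K with
     | Periodic => dlang (@prog F (drun (lead F) u)) (a :: v')
     | _ => fdfa_accepts F u (a :: v')
     end) /\ forall n, w n = prepend u (opow a v') n.

(** Quotients by a relation: classes are the predicates [R x]. *)
Definition qclass {T : Type} (R : T -> T -> Prop) : Type :=
  {P : T -> Prop | exists x, P = R x}.
Definition qcls {T : Type} (R : T -> T -> Prop) (x : T) : qclass R :=
  exist (fun P => exists y, P = R y) (R x) (ex_intro _ x erefl).
Definition qrep {T : Type} (R : T -> T -> Prop) (q : qclass R) : T :=
  proj1_sig (constructive_indefinite_description _ (proj2_sig q)).

Definition quot_dfa (R : seq S -> seq S -> Prop) (acc : qclass R -> Prop) : DFA :=
  {| dstate := qclass R;
     dinit := qcls R [::];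
     dstep := fun q a => qcls R (qrep q ++ [:: a]);
     dacc := acc |}.

Section Canonical.
Variable L : (nat -> S) -> Prop.

Definition simL (x y : seq S) : Prop :=
  forall w, L (prepend x w) <-> L (prepend y w).

(** "u v^omega in L"; for v = eps we use the convention eps^omega \notin L. *)
Definition inL (u v : seq S) : Prop :=
  match v with
  | [::] => False
  | a :: v' => L (prepend u (opow a v'))
  end.

Definition approx (K : fdfa_kind) (u : seq S) (x y : seq S) : Prop :=
  match K with
  | Periodic => forall v, inL u (x ++ v) <-> inL u (y ++ v)
  | Syntactic => simL (u ++ x) (u ++ y) /\
      forall v, simL (u ++ x ++ v) u -> (inL u (x ++ v) <-> inL u (y ++ v))
  | Recurrent => forall v,
      (simL (u ++ x ++ v) u /\ inL u (x ++ v)) <->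
      (simL (u ++ y ++ v) u /\ inL u (y ++ v))
  end.

Definition accprop (K : fdfa_kind) (u v : seq S) : Prop :=
  match K with
  | Periodic => inL u v
  | _ => simL (u ++ v) u /\ inL u v
  end.

Definition progress_dfa (K : fdfa_kind) (u : seq S) : DFA :=
  quot_dfa (fun q => exists v, q = qcls (approx K u) v /\ accprop K u v).

Definition canonical_fdfa (K : fdfa_kind) : FDFA :=
  {| lead := @quot_dfa simL (fun _ => False);
     prog := fun q => progress_dfa K (qrep q) |}.

End Canonical.
End Words.

(* Main.v *)
Require Import Defs.
From mathcomp Require Import all_boot.
From mathcomp Require Import zify.
From Stdlib Require Import ClassicalEpsilon FunctionalExtensionality PropExtensionality ProofIrrelevance Classical.

Set Implicit Arguments.
Unset Strict Implicit.
Unset Printing Implicit Defensive.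

Section Aux.
Variable S : finType.

Lemma prepend_cat (x y : seq S) w : prepend (x ++ y) w = prepend x (prepend y w).
Proof. by elim: x => [|a x IH] //=; rewrite IH. Qed.

Lemma prepend_nth (s : seq S) f n d :
  prepend s f n = if n < size s then nth d s n else f (n - size s).
Proof.
elim: s n => [|a s IH] n /=; first by rewrite subn0.
by case: n => [|n] //=; rewrite IH ltnS subSS.
Qed.

Lemma opow_sub (a : S) v' n : (size v').+1 <= n ->
  opow a v' (n - (size v').+1) = opow a v' n.
Proof.
move=> H; rewrite /opow; congr nth.
by rewrite -{2}(subnK H) modnDr.
Qed.

Lemma opow_unfold (a : S) v' : prepend (a :: v') (opow a v') = opow a v'.
Proof.
apply: functional_extensionality => n.
rewrite (prepend_nth _ _ _ a).
case: ifP => H.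
  by rewrite /opow modn_small.
by rewrite opow_sub //; rewrite leqNgt H.
Qed.

Lemma opow_fix (b : S) s f : f = prepend (b :: s) f -> f = opow b s.
Proof.
move=> E; apply: functional_extensionality => n.
elim/ltn_ind: n => n IH.
rewrite E (prepend_nth _ _ _ b); case: ifP => H.
  by rewrite /opow modn_small.
have Hn : (size (b :: s)) <= n by rewrite leqNgt H.
rewrite IH; last by rewrite /= in Hn *; lia.
exact: opow_sub.
Qed.

Fixpoint rp (k : nat) (v : seq S) : seq S := if k is k'.+1 then v ++ rp k' v else [::].

Lemma rp_add i k v : rp (i + k) v = rp i v ++ rp k v.
Proof. by elim: i => [|i IH] //=; rewrite IH catA. Qed.

Lemma prepend_rp k v (f : nat -> S) : prepend v f = f -> prepend (rp k v) f = f.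
Proof. move=> H; elim: k => [|k IH] //=; by rewrite prepend_cat IH H. Qed.

Section Q.
Variable R : seq S -> seq S -> Prop.
Hypothesis Hrefl : forall x, R x x.
Hypothesis Hsym : forall x y, R x y -> R y x.
Hypothesis Htrans : forall x y z, R x y -> R y z -> R x z.

Lemma qcls_eq x y : R x y -> qcls R x = qcls R y.
Proof.
move=> Hxy.
have E : R x = R y.
  apply: functional_extensionality => z; apply: propositional_extensionality.
  split=> H; [exact: Htrans (Hsym Hxy) H | exact: Htrans Hxy H].
rewrite /qcls.
move: (ex_intro (fun z => R x = R z) x erefl) (ex_intro (fun z => R y = R z) y erefl).
move: (R x) E => P -> p1 p2; f_equal; apply: proof_irrelevance.
Qed.

Lemma qcls_inj x y : qcls R x = qcls R y -> R x y.
Proof. move=> /(f_equal (@proj1_sig _ _)) /= ->; exact: Hrefl. Qed.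

Lemma qrep_spec x : R x (qrep (qcls R x)).
Proof.
rewrite /qrep.
case: (constructive_indefinite_description _ _) => y /= ->; exact: Hrefl.
Qed.

Hypothesis Hcong : forall x y a, R x y -> R (x ++ [:: a]) (y ++ [:: a]).

Lemma drun_quot (acc : qclass R -> Prop) w : drun (@quot_dfa S R acc) w = qcls R w.
Proof.
elim/last_ind: w => [|w a IH] //.
rewrite /drun foldl_rcons -/(drun _ w) IH /= -cats1.
apply: qcls_eq; apply: Hcong; apply: Hsym; exact: qrep_spec.
Qed.
End Q.

Section N.
Variable A : NBA S.

Definition nstep (X : {set nba_state A}) (a : S) : {set nba_state A} :=
  [set q' | [exists q in X, nba_trans q a q']].
Definition reachX X (x : seq S) := foldl nstep X x.
Definition init_set : {set nba_state A} := [set q | nba_init q].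

Definition acc_from (q : nba_state A) (w : nat -> S) : Prop :=
  exists r : nat -> nba_state A, r 0 = q /\ (forall n, nba_trans (r n) (w n) (r n.+1)) /\
    (forall N, exists2 n, N <= n & nba_final (r n)).

Lemma acc_cons q a W :
  acc_from q (fun n => match n with 0 => a | n'.+1 => W n' end) <->
  exists q', nba_trans q a q' /\ acc_from q' W.
Proof.
split.
  move=> [r [r0 [Ht Hf]]]; exists (r 1); split; first by rewrite -r0; exact: (Ht 0).
  exists (fun n => r n.+1); split=> //; split; first by move=> n; exact: (Ht n.+1).
  move=> N; case: (Hf N.+1) => [[|n]] // Hn Hfn; by exists n.
move=> [q' [Ht [r [r0 [Hr Hf]]]]].
exists (fun n => match n with 0 => q | n'.+1 => r n' end); split=> //; split.
  by case=> [|n] //=; rewrite r0.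
move=> N; case: (Hf N) => n Hn Hfn; exists n.+1 => //; exact: leqW.
Qed.

Lemma reach_ok X x w :
  (exists2 q, q \in reachX X x & acc_from q w) <->
  (exists2 q, q \in X & acc_from q (prepend x w)).
Proof.
elim: x X => [|a x IH] X //=.
rewrite /reachX /= -/(reachX _ x) IH.
split.
  move=> [q' /[!inE] /existsP [q /andP [HqX Ht]] Hacc].
  exists q => //; apply/acc_cons; by exists q'.
move=> [q HqX /acc_cons [q' [Ht Hacc]]].
exists q' => //; rewrite inE; apply/existsP; exists q; by rewrite HqX.
Qed.

Lemma accepts_iff w : nba_accepts A w <-> exists2 q, q \in init_set & acc_from q w.
Proof.
split.
  move=> [r [Hi [Ht Hf]]]; exists (r 0); first by rewrite inE.
  by exists r.
move=> [q /[!inE] Hq [r [r0 [Ht Hf]]]]; exists r; by rewrite r0.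
Qed.

Lemma simL_reach (L : (nat -> S) -> Prop) x y :
  (forall w, L w <-> nba_accepts A w) ->
  reachX init_set x = reachX init_set y -> simL L x y.
Proof.
move=> HL Heq w; rewrite !HL !accepts_iff -!reach_ok Heq; by [].
Qed.
End N.

Lemma pigeon (T : finType) (f : nat -> T) : exists i k, f i = f (i + k.+1).
Proof.
apply: NNPP => Hn.
pose g := fun i : 'I_(#|T|.+1) => f i.
have Hinj : injective g.
  move=> i j Hij; apply: val_inj => /=.
  case: (ltngtP i j) => // H.
    exfalso; apply: Hn; exists i, (j - i - 1).
    rewrite /g in Hij; rewrite Hij; congr f; lia.
  exfalso; apply: Hn; exists j, (i - j - 1).
  rewrite /g in Hij; rewrite -Hij; congr f; lia.
have := leq_card _ Hinj; rewrite card_ord; lia.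
Qed.

End Aux.

Theorem lemma6 (S : finType) (L : (nat -> S) -> Prop) (K : fdfa_kind) :
  omega_regular L ->
  forall w : nat -> S,
    UP_orig K (canonical_fdfa L K) w <-> UP (canonical_fdfa L K) w.
Proof.
move=> [A HL] w.
case: K; try by [].
have sR : forall x, simL L x x by [].
have sS : forall x y, simL L x y -> simL L y x by move=> x y H z; rewrite H.
have sT : forall x y z, simL L x y -> simL L y z -> simL L x z
  by move=> x y z H1 H2 t; rewrite H1 H2.
have sC : forall x y a, simL L x y -> simL L (x ++ [:: a]) (y ++ [:: a]).
  by move=> x y a H t; rewrite !prepend_cat H.
have Hlead : forall z, drun (lead (canonical_fdfa L Periodic)) z = qcls (simL L) z.
  move=> z; exact: drun_quot.
have pR : forall u x, approx L Periodic u x x by [].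
have pS : forall u x y, approx L Periodic u x y -> approx L Periodic u y x
  by move=> u x y H v; rewrite H.
have pT : forall u x y z, approx L Periodic u x y -> approx L Periodic u y z ->
   approx L Periodic u x z by move=> u x y z H1 H2 v; rewrite H1 H2.
have pC : forall u x y a, approx L Periodic u x y ->
   approx L Periodic u (x ++ [:: a]) (y ++ [:: a]).
  by move=> u x y a H v; rewrite -!catA H.
have Hprog : forall u z, drun (progress_dfa L Periodic u) z = qcls (approx L Periodic u) z.
  move=> u z; exact: (@drun_quot S (approx L Periodic u) (pR u) (@pS u) (@pT u) (@pC u)).
split; last first.
  move=> [u [a [v' [[_ H1] H2]]]]; by exists u, a, v'.
move=> [u [a [v' [Hacc Hw]]]].
rewrite /dlang Hlead /= in Hacc.
set x := qrep (qcls (simL L) u) in Hacc.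
have Hux : simL L u x by apply: qrep_spec.
rewrite Hprog /= in Hacc.
case: Hacc => v0 [Heq Hv0].
have Happ := qcls_inj (pR x) Heq.
have Hin : inL L x (a :: v') by move: (Happ [::]); rewrite !cats0 /accprop => ->.
set Om := opow a v'.
have HuOm : L (prepend u Om) by rewrite (Hux Om).
set V := a :: v'.
have [i [k Hik]] := pigeon (fun n => reachX (init_set A) (u ++ rp n V)).
set u' := u ++ rp i V.
set t := v' ++ rp k V.
have HVk : rp k.+1 V = a :: t by [].
have HOmV : prepend V Om = Om := opow_unfold a v'.
have HOmfix : Om = prepend (a :: t) Om.
  by rewrite -HVk (_ : rp k.+1 V = V ++ rp k V) // prepend_cat prepend_rp // HOmV.
have Hopt : opow a t = Om by symmetry; apply: opow_fix.
have Hu'Om : prepend u' Om = prepend u Om.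
  by rewrite /u' prepend_cat prepend_rp.
exists u', a, t; split; last by move=> n; rewrite Hw Hopt Hu'Om.
split.
  rewrite !Hlead; apply: qcls_eq => //.
  apply: (simL_reach HL).
  by rewrite /u' -catA -HVk -rp_add -Hik.
rewrite /dlang Hlead /=.
set x' := qrep (qcls (simL L) u').
have Hux' : simL L u' x' by apply: qrep_spec.
rewrite Hprog /=.
exists (a :: t); split => //.
rewrite /accprop /inL Hopt -(Hux' Om) Hu'Om; exact: HuOm.
Qed.
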